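(* Consider neurons $i=1,\dots,n$ with weights $w_i\ge 0$ and continuous input functions $\beta_i:U\times\mathbb{R}^{i-1}\to\mathbb{R}$, and set $f_i(x_i,\langle u,x_1,\dots,x_{i-1}\rangle)=\tanh(w_i x_i+\beta_i(u,x_1,\dots,x_{i-1}))$. Fix $u\in U$, $i\in[n]$ and $x_1,\dots,x_i\in\mathbb{R}$, and define for every $j\in[i]$ the sequence $(x_{j,t})_{t\ge0}$ by $x_{j,0}=x_j$ and $x_{j,t}=f_j(x_{j,t-1},\langle u,x_{1,t-1},\dots,x_{j-1,t-1}\rangle)$ for $t\ge1$. Then the sequence $(x_{i,t})_{t\ge0}$ is convergent.
   Context: This is the sequence of states of the $i$-th neuron of an $\mathrm{RNC}_+$ when the same input $u$ is repeatedly applied from the state $\langle x_1,\dots,x_i\rangle$; denote it $\mathcal{S}_i(u,x_1,\dots,x_i)$. *)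

(* Defs.v *)
From HB Require Import structures.
From mathcomp Require Import all_boot all_order all_algebra.
From mathcomp Require Import all_classical all_reals all_analysis.
Unset Printing Implicit Defensive.
Import Order.TTheory GRing.Theory Num.Theory.
Import numFieldNormedType.Exports.
Local Open Scope ring_scope.

Definition tanh {R : realType} (x : R) : R :=
  (expR x - expR (- x)) / (expR x + expR (- x)).

(* neurons are indexed 0..n-1 (paper: 1..n); neuron j receives the
   states of neurons 0..j-1, a row vector of length j *)
Definition ordI {n} (i : 'I_n) (j : 'I_i.+1) : 'I_n :=
  Ordinal (leq_trans (ltn_ord j) (ltn_ord i)).
Definition ordL {m} (j : 'I_m) (k : 'I_j) : 'I_m :=
  Ordinal (ltn_trans (ltn_ord k) (ltn_ord j)).

Definition rnc_step {R : realType} {U : Type} {n : nat} (w : 'I_n -> R)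
  (beta : forall j : 'I_n, U * 'rV[R]_j -> R) (u : U) (i : 'I_n)
  (s : 'I_i.+1 -> R) : 'I_i.+1 -> R :=
  fun j => tanh (w (@ordI n i j) * s j
                 + beta (@ordI n i j) (u, \row_(k < j) s (@ordL i.+1 j k))).

Definition rnc_traj {R : realType} {U : Type} {n : nat} (w : 'I_n -> R)
  (beta : forall j : 'I_n, U * 'rV[R]_j -> R) (u : U) (i : 'I_n)
  (x : 'I_i.+1 -> R) (t : nat) : 'I_i.+1 -> R :=
  iter t (rnc_step w beta u i) x.

(* Main.v *)
Require Import Defs.
From HB Require Import structures.
From mathcomp Require Import all_boot all_order all_algebra.
From mathcomp Require Import all_classical all_reals all_analysis.
From mathcomp Require Import ring lra.
Import Order.TTheory GRing.Theory Num.Theory.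
Import numFieldNormedType.Exports.
Local Open Scope ring_scope.
Local Open Scope classical_set_scope.

Section T.
Variable R : realType.

Lemma tanhE (z : R) : tanh z = (expR z ^+ 2 - 1) / (expR z ^+ 2 + 1).
Proof.
rewrite /tanh expRN.
have e0 : 0 < expR z by rewrite expR_gt0.
have hz : expR z != 0 by rewrite gt_eqF.
have h1 : expR z + (expR z)^-1 != 0 by rewrite gt_eqF // addr_gt0 ?invr_gt0.
have h2 : expR z ^+ 2 + 1 != 0 by rewrite gt_eqF // ltr_wpDl ?sqr_ge0.
by field; rewrite h2 hz.
Qed.

Lemma tanh_le (a c : R) : a <= c -> tanh a <= tanh c.
Proof.
move=> ac; rewrite !tanhE.
set s := expR a ^+ 2; set t := expR c ^+ 2.
have s0 : 0 <= s by rewrite sqr_ge0.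
have st : s <= t by rewrite ler_pXn2r ?nnegrE ?expR_ge0 // ler_expR.
rewrite ler_pdivrMr ?ltr_wpDl ?sqr_ge0 //.
rewrite mulrAC ler_pdivlMr ?ltr_wpDl ?sqr_ge0 //.
nra.
Qed.

Lemma tanh_fix (z y : R) : tanh z = y -> expR z ^+ 2 * (1 - y) = 1 + y.
Proof.
rewrite tanhE => <-.
have h : expR z ^+ 2 + 1 != 0 by rewrite gt_eqF // ltr_wpDl ?sqr_ge0.
field => //.
Qed.

Lemma tanh_cont : continuous (@tanh R).
Proof.
move=> z; rewrite /tanh.
have ce : forall (f : R -> R) (a : R), f @ a --> f a -> (fun y => expR (f y)) @ a --> expR (f a).
  by move=> f a hf; apply: continuous_cvg; [exact: continuous_expR | exact: hf].
apply: cvgM; first apply: cvgB.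
- exact: (ce id).
- apply: (ce (fun y => - y)); exact: cvgN.
apply: cvgV; first by rewrite gt_eqF // addr_gt0 ?expR_gt0.
apply: cvgD; first exact: (ce id).
apply: (ce (fun y => - y)); exact: cvgN.
Qed.

Lemma fix3 (w b y d : R) : d != 0 -> tanh (w*(y-d)+b) = y-d -> tanh(w*y+b) = y ->
  tanh(w*(y+d)+b) = y+d -> y = 0.
Proof.
move=> d0 /tanh_fix H1 /tanh_fix H2 /tanh_fix H3.
set a1 := expR (w*(y-d)+b) in H1; set a2 := expR (w*y+b) in H2;
set a3 := expR (w*(y+d)+b) in H3.
have P : a1 * a3 = a2 * a2.
  rewrite /a1 /a2 /a3 -!expRD; congr expR; ring.
have E : (1+(y-d))*(1+(y+d))*(1-y)^+2 = (1+y)^+2*(1-(y-d))*(1-(y+d)).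
  rewrite -H1 -H3 -H2.
  transitivity ((a1*a3)^+2 * (1-(y-d))*(1-(y+d))*(1-y)^+2); first by ring.
  rewrite P; ring.
have : 4 * y * d ^+ 2 = 0.
  have -> : 4 * y * d ^+ 2 = (1+(y-d))*(1+(y+d))*(1-y)^+2 - (1+y)^+2*(1-(y-d))*(1-(y+d)) by ring.
  by rewrite E subrr.
move/eqP; rewrite !mulf_eq0 (negbTE d0) !orbF.
by case/orP => /eqP // /eqP; lra.
Qed.

Lemma tanh_bd (z : R) : -1 <= tanh z <= 1.
Proof.
rewrite tanhE; set s := expR z ^+ 2.
have s0 : 0 <= s by rewrite sqr_ge0.
have s1 : 0 < s + 1 by lra.
rewrite ler_pdivlMr // ler_pdivrMr //; apply/andP; split; lra.
Qed.

Lemma scalar_cvg (w b0 : R) (x b : nat -> R) : 0 <= w -> b @ \oo --> b0 ->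
  (forall t, x t.+1 = tanh (w * x t + b t)) -> exists l : R, x @ \oo --> l.
Proof.
move=> w0 hb hx.
set B := 1 + `|x 0|.
have xb : forall t, -B <= x t <= B.
  have n0 := normr_ge0 (x 0).
  case=> [|t].
    have := ler_norml (x 0) `|x 0|; rewrite lexx => /esym/andP[h1 h2].
    apply/andP; rewrite /B; split; lra.
  rewrite hx; have /andP[h1 h2] := tanh_bd (w * x t + b t).
  apply/andP; rewrite /B; split; lra.
have hu : has_ubound (range x) by exists B => _ [t _ <-]; case/andP: (xb t).
have hl : has_lbound (range x) by exists (-B) => _ [t _ <-]; case/andP: (xb t).
have hS := cvg_sups_inf hu hl; have hI := cvg_infs_sup hu hl.
set M := inf (range (sups x)) in hS; set L := sup (range (infs x)) in hI.
have hIx : forall n, infs x n <= x n.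
  move=> n; rewrite /infs /=; apply: (ge_inf (has_lbound_sdrop hl n)).
  by exists n => /=.
have hSx : forall n, x n <= sups x n.
  move=> n; rewrite /sups /=; apply: (ub_le_sup (has_ubound_sdrop hu n)).
  by exists n => /=.
have evge : forall p T, (forall t, (T <= t)%N -> p <= x t) -> p <= L.
  move=> p T H; apply: (ler_cvg_to (cvg_cst p) hI).
  exists T => // n /= Tn; rewrite /infs /=; apply: lb_le_inf.
    by exists (x n); exists n => /=.
  by move=> _ [k /= nk <-]; apply: H; apply: leq_trans nk.
have evle : forall p T, (forall t, (T <= t)%N -> x t <= p) -> M <= p.
  move=> p T H; apply: (ler_cvg_to hS (cvg_cst p)).
  exists T => // n /= Tn; rewrite /sups /=; apply: ge_sup.
    by exists (x n); exists n => /=.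
  by move=> _ [k /= nk <-]; apply: H; apply: leq_trans nk.
have key : forall p, L < p -> p < M -> tanh (w * p + b0) = p.
  move=> p Lp pM.
  have hc : (fun t => tanh (w * p + b t)) @ \oo --> tanh (w * p + b0).
    apply: (@continuous_cvg _ _ _ _ _ (fun t => w * p + b t) (@tanh R) (w * p + b0) (tanh_cont _)).
    rewrite -[X in _ --> X]/(w * p + b0).
    exact: cvgD (cvg_cst _) hb.
  have [gt|lt|//] := ltgtP (tanh (w * p + b0)) p.
  - have [T _ HT] := cvgr_lt _ hc _ gt.
    case: (pselect (exists t0, (T <= t0)%N /\ x t0 <= p)).
    + move=> [t0 [Tt0 xt0]].
      have H : forall k, x (t0 + k)%N <= p.
        elim=> [|k IH]; first by rewrite addn0.
        rewrite addnS hx; apply: le_trans (ltW (HT (t0 + k)%N _)); last first.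
          by rewrite /= (leq_trans Tt0) // leq_addr.
        by apply: tanh_le; rewrite lerD2r ler_wpM2l.
      have H' : forall t, (t0 <= t)%N -> x t <= p by move=> t ht; rewrite -(subnKC ht); exact: H.
      have := evle p t0 H'.
      by rewrite leNgt pM.
    + move=> nE; suff : p <= L by rewrite leNgt Lp.
      apply: (evge p T).
      move=> t Tt; rewrite leNgt; apply/negP => h; apply: nE.
      by exists t; split => //; exact: ltW.
  - have [T _ HT] := cvgr_gt _ hc _ lt.
    case: (pselect (exists t0, (T <= t0)%N /\ p <= x t0)).
    + move=> [t0 [Tt0 xt0]].
      have H : forall k, p <= x (t0 + k)%N.
        elim=> [|k IH]; first by rewrite addn0.
        rewrite addnS hx; apply: le_trans (ltW (HT (t0 + k)%N _)) _; first by rewrite /= (leq_trans Tt0) // leq_addr.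
        by apply: tanh_le; rewrite lerD2r ler_wpM2l.
      have H' : forall t, (t0 <= t)%N -> p <= x t by move=> t ht; rewrite -(subnKC ht); exact: H.
      have := evge p t0 H'.
      by rewrite leNgt Lp.
    + move=> nE; suff : M <= p by rewrite leNgt pM.
      apply: (evle p T).
      move=> t Tt; rewrite leNgt; apply/negP => h; apply: nE.
      by exists t; split => //; exact: ltW.
have LM : L <= M.
  apply: (ler_cvg_to hI hS); apply: nearW => n; exact: le_trans (hIx n) (hSx n).
have eLM : L = M.
  apply/eqP; rewrite eq_le LM /= leNgt; apply/negP => LltM.
  have [d [d0 dM]] : exists d, 0 < d /\ L + 8 * d = M.
    exists ((M - L) / 8); split; first by rewrite divr_gt0 // subr_gt0.
    by field; lra.
  have [y0|y0] := eqVneq (L + 2 * d) 0.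
    have := fix3 w b0 (L + 6 * d) d (lt0r_neq0 d0).
    rewrite !key; try lra.
  have := fix3 w b0 (L + 2 * d) d (lt0r_neq0 d0).
  rewrite !key; try lra.
exists M; apply: (@squeeze_cvgr _ _ _ _ (infs x) (sups x) x _ M); [|by rewrite -eLM|exact: hS].
by apply: nearW => n; rewrite hIx hSx.
Qed.

Lemma row_cvg (j : nat) (f : nat -> 'I_j -> R) (l : 'I_j -> R) :
  (forall k, (fun t => f t k) @ \oo --> l k) ->
  (fun t => \row_k f t k) @ \oo --> (\row_k l k : 'rV[R]_j).
Proof.
move=> hf; apply/cvg_mx_entourageP => A entA.
have H : forall k : 'I_j, \forall t \near \oo, A (l k, f t k).
  by move=> k; have := hf k; move/cvg_entourageP; apply.
have H2 := filter_forall _ H.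
rewrite near_map; case: H2 => N _ HN; exists N => // t Nt i0 j0.
by rewrite !mxE in_setE; exact: HN.
Qed.
End T.

Theorem proposition4 (R : realType) (U : topologicalType) (n : nat)
  (w : 'I_n -> R) (beta : forall j : 'I_n, U * 'rV[R]_j -> R)
  (hw : forall j, 0 <= w j) (hbeta : forall j, continuous (beta j))
  (u : U) (i : 'I_n) (x : 'I_i.+1 -> R) :
  exists l : R, (fun t => rnc_traj w beta u i x t ord_max) @ \oo --> l.
Proof.
set s := rnc_traj w beta u i x.
suff H : forall m (j : 'I_i.+1), (j < m)%N ->
    exists l : R, (fun t => s t j) @ \oo --> l.
  exact: (H i.+1 ord_max (ltn_ord _)).
elim=> [|m IH] j; first by [].
rewrite ltnS leq_eqVlt => /orP[/eqP ej|jm]; last exact: IH.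
have hk : forall k : 'I_j, exists l : R, (fun t => s t (ordL j k)) @ \oo --> l.
  by move=> k; apply: IH; rewrite /= -ej ltn_ord.
have [lf hlf] := choice hk.
apply: (@scalar_cvg R (w (ordI i j)) (beta (ordI i j) (u, \row_k lf k))
   (fun t => s t j) (fun t => beta (ordI i j) (u, \row_k s t (ordL j k)))).
- exact: hw.
- apply: (@continuous_cvg _ _ _ _ _ (fun t => (u, \row_k s t (ordL j k)))
     (beta (ordI i j)) (u, \row_k lf k) (hbeta _ _)).
  have h1 := cvg_pair (cvg_cst u) (@row_cvg R j (fun t k => s t (ordL j k)) lf hlf). exact: h1.
- by move=> t; rewrite /s /rnc_traj iterS.
Qed.
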